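(* For all integers $k\geq1$ and $i\geq0$, the class $E(b_k(i))$ belongs to $\mathcal{E}$.
   Context: For $k\geq1$, $i\geq0$ let $b_k(i)$ be the rational number with continued fraction $[5;\{1,4\}^{\times(k-1)},1,2+2i]$, i.e. $[5;1,4,1,4,\dots,1,4,1,2+2i]$ with the pair $1,4$ repeated $k-1$ times. Write $b_k(i)=p/q$ in lowest terms and $d:=\tfrac14(p+q)$. Weight expansion: for rational $a\geq1$ with continued fraction $[l_0;l_1,\dots,l_N]$ ($l_N\geq2$ if $N\geq1$), $w(a)=(1^{\times l_0},x_1^{\times l_1},\dots,x_N^{\times l_N})$ with $x_0=1$, $x_1=a-l_0$, $x_i=x_{i-2}-l_{i-1}x_{i-1}$; $x^{\times l}$ is $x$ repeated $l$ times. The last block of $q\,w(b_k(i))$ is $1^{\times(2+2i)}$. If $i=2j$: let $m$ be $q\,w(b_k(2j))$ with its last block $(1^{\times(4j+2)})$ replaced by $(j+1,j,1^{\times(2j+1)})$, and $E(b_k(2j)):=(d,d;m)$. If $i=2j+1$: let $m$ be $q\,w(b_k(2j+1))$ with its last block $(1^{\times(4j+4)})$ replaced by $((j+1)^{\times2},1^{\times(2j+2)})$, and $E(b_k(2j+1)):=(d+\tfrac12,d-\tfrac12;m)$. The set $\mathcal{E}$: a Cremona transform of an integer tuple $(\delta;n_1,\dots,n_k)$ with $n_1\geq\dots\geq n_k$ is $(2\delta-n_1-n_2-n_3;\delta-n_2-n_3,\delta-n_1-n_3,\delta-n_1-n_2,n_4,\dots,n_k)$; a Cremona move is a Cremona transform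 followed by a permutation of the entries after the semicolon. $\mathcal{E}$ consists of $(0,0;-1)$ together with all integer tuples $(d,e;m_1,\dots,m_M)$ with $d,e\geq0$, $m_1\geq\dots\geq m_M\geq0$, satisfying $\sum m_i=2(d+e)-1$, $\sum m_i^2=2de+1$, and such that $(d+e-m_1;d-m_1,e-m_1,m_2,\dots,m_M)$ reduces to $(0;-1,0,\dots,0)$ by repeated Cremona moves. *)

(* Defs.v *)
From HB Require Import structures.
From mathcomp Require Import all_boot all_order all_algebra.
From Stdlib Require Import Relations.
Set Implicit Arguments. Unset Strict Implicit. Unset Printing Implicit Defensive.
Import Order.TTheory GRing.Theory Num.Theory.
Local Open Scope ring_scope.

Fixpoint cf_val (l : seq nat) : rat :=
  match l with
  | [::] => 0
  | [:: a] => a%:R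
  | a :: s => a%:R + (cf_val s)^-1
  end.

Definition bseq (k i : nat) : seq nat :=
  5%N :: flatten (nseq k.-1 [:: 1%N; 4%N]) ++ [:: 1%N; (2 + 2 * i)%N].

Definition bki (k i : nat) : rat := cf_val (bseq k i).

Definition pk (k i : nat) : int := numq (bki k i).
Definition qk (k i : nat) : int := denq (bki k i).
Definition dk (k i : nat) : rat := ((pk k i + qk k i)%:~R) / 4.

(* (x_n, x_{n+1}) for the weight expansion of a with CF l:
   x_0 = 1, x_1 = a - l_0, x_{n+2} = x_n - l_{n+1} x_{n+1}. *)
Fixpoint xpair (a : rat) (l : seq nat) (n : nat) : rat * rat :=
  match n with
  | O => (1, a - (nth 0%N l 0)%:R)
  | S n' => let: (u, v) := xpair a l n' in (v, u - (nth 0%N l n)%:R * v)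
  end.

Definition xw (a : rat) (l : seq nat) (n : nat) : rat := (xpair a l n).1.

Definition weights (a : rat) (l : seq nat) : seq rat :=
  flatten [seq nseq (nth 0%N l j) (xw a l j) | j <- iota 0 (size l)].

Definition qw (k i : nat) : seq rat :=
  [seq (qk k i)%:~R * y | y <- weights (bki k i) (bseq k i)].

Definition Eclass (k i : nat) : rat * rat * seq rat :=
  let s := qw k i in
  let j := i./2 in
  let front := take (size s - (2 + 2 * i))%N s in
  if ~~ odd i then
    (dk k i, dk k i,
     front ++ [:: (j.+1)%:R; j%:R] ++ nseq (2 * j + 1)%N 1)
  else
    (dk k i + 1/2, dk k i - 1/2,
     front ++ nseq 2 (j.+1)%:R ++ nseq (2 * j + 2)%N 1).

(* Cremona transform of (delta; n1, ..., nk), n1 >= ... >= nk, k >= 3. *)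
Definition cremona (delta : int) (n : seq int) : int * seq int :=
  let n1 := nth 0 n 0 in let n2 := nth 0 n 1 in let n3 := nth 0 n 2 in
  (2 * delta - n1 - n2 - n3,
   [:: delta - n2 - n3; delta - n1 - n3; delta - n1 - n2] ++ drop 3 n).

Definition cremona_move (t t' : int * seq int) : Prop :=
  exists s : seq int,
    [/\ perm_eq s t.2, sorted (fun x y : int => y <= x) s, (3 <= size s)%N
      & (t'.1 = (cremona t.1 s).1 /\ perm_eq t'.2 (cremona t.1 s).2)].

Definition reduces_to_E0 (t : int * seq int) : Prop :=
  exists t' : int * seq int,
    clos_refl_trans _ cremona_move t t' /\
    t'.1 = 0 /\ t'.2 = -1 :: nseq (size t'.2).-1 0.

Definition in_calE (d e : int) (m : seq int) : Prop :=
  (d = 0 /\ e = 0 /\ m = [:: -1]) \/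
  (0 <= d /\ 0 <= e /\ sorted (fun x y : int => y <= x) m /\
   all (fun x : int => 0 <= x) m /\
   \sum_(x <- m) x = 2 * (d + e) - 1 /\
   \sum_(x <- m) x ^+ 2 = 2 * d * e + 1 /\
   (exists (m1 : int) (mr : seq int), m = m1 :: mr /\
      reduces_to_E0 (d + e - m1, [:: d - m1, e - m1 & mr]))).

(* Main.v *)
Require Import Defs.
From HB Require Import structures.
From mathcomp Require Import all_boot all_order all_algebra.
From mathcomp Require Import zify ring lra.
From Stdlib Require Import Relations.
Import Order.TTheory GRing.Theory Num.Theory.
Local Open Scope ring_scope.

Definition geZ := (fun x y : int => y <= x).

Lemma geZ_total : total geZ.
Proof. by move=> x y; rewrite /geZ le_total. Qed.

Lemma move3 (d x1 x2 x3 : int) (o l l' : seq int) :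
  perm_eq l ([:: x1; x2; x3] ++ o) -> x2 <= x1 -> x3 <= x2 ->
  all (fun y => y <= x3) o ->
  perm_eq l' [:: d - x2 - x3, d - x1 - x3, d - x1 - x2 & o] ->
  reduces_to_E0 (2 * d - x1 - x2 - x3, l') -> reduces_to_E0 (d, l).
Proof.
move=> Hl H21 H32 Ho Hl' [t' [Hrt Hfin]].
exists t'; split=> //.
apply: rt_trans Hrt; apply: rt_step.
exists ([:: x1; x2; x3] ++ sort geZ o); split=> //=.
- by rewrite perm_sym (permPl Hl) !perm_cons perm_sym perm_sort.
- rewrite H21 H32 /= path_min_sorted; first exact: (sort_sorted geZ_total).
  by rewrite all_sort.
- split=> //; rewrite (permPl Hl') /cremona /= drop0.
  by rewrite perm_cons perm_cons perm_cons perm_sym perm_sort.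
Qed.

Lemma final_red n : reduces_to_E0 (0, -1 :: nseq n 0).
Proof. exists (0, -1 :: nseq n 0); split; [exact: rt_refl | by rewrite /= size_nseq]. Qed.

Definition inv1 (t : int * seq int) : int := 3 * t.1 - \sum_(x <- t.2) x.
Definition inv2 (t : int * seq int) : int := t.1 ^+ 2 - \sum_(x <- t.2) x ^+ 2.

Lemma move_inv t t' : cremona_move t t' -> inv1 t' = inv1 t /\ inv2 t' = inv2 t.
Proof.
case=> s [Hs _ Hsz [H1 H2]].
rewrite /inv1 /inv2 H1 (perm_big _ H2) (perm_big _ H2) -(perm_big _ Hs) -(perm_big _ Hs).
clear H1 H2; case: s Hs Hsz => [|n1 [|n2 [|n3 r]]] //= _ _.
rewrite /cremona /= drop0 !big_cons; split; ring.
Qed.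

Lemma rt_inv t t' : clos_refl_trans _ cremona_move t t' ->
  inv1 t' = inv1 t /\ inv2 t' = inv2 t.
Proof.
elim=> [x y /move_inv //| x // | x y z _ [A B] _ [C D]].
by rewrite C D A B.
Qed.

Lemma sum_nseq0 n : \sum_(x <- nseq n (0:int)) x = 0.
Proof. by rewrite big_nseq; elim: n => //= n ->; rewrite addr0. Qed.
Lemma sum2_nseq0 n : \sum_(x <- nseq n (0:int)) x ^+ 2 = 0.
Proof. by rewrite big_nseq; elim: n => //= n ->; rewrite expr0n addr0. Qed.

Lemma red_inv t : reduces_to_E0 t -> inv1 t = 1 /\ inv2 t = -1.
Proof.
case=> t' [/rt_inv [<- <-] [H1 H2]].
rewrite /inv1 /inv2 H1 H2 !big_cons sum_nseq0 sum2_nseq0; split => //.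
Qed.

Lemma move3' (d d' x1 x2 x3 y1 y2 y3 : int) (o l l' : seq int) :
  perm_eq l ([:: x1; x2; x3] ++ o) -> x2 <= x1 -> x3 <= x2 ->
  all (fun y => y <= x3) o ->
  d' = 2 * d - x1 - x2 - x3 -> y1 = d - x2 - x3 -> y2 = d - x1 - x3 ->
  y3 = d - x1 - x2 ->
  perm_eq l' ([:: y1; y2; y3] ++ o) ->
  reduces_to_E0 (d', l') -> reduces_to_E0 (d, l).
Proof.
move=> Hl H21 H32 Ho E1 E2 E3 E4 Hl'; rewrite E1; apply: move3 Hl H21 H32 Ho _; by rewrite -E2 -E3 -E4.
Qed.

Lemma all_le_trans (r r' : int) (W : seq int) :
  all (fun y => y <= r) W -> r <= r' -> all (fun y => y <= r') W.
Proof. move=> H hr; apply: sub_all H => y /= hy; exact: le_trans hy hr. Qed.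

Lemma all_catW (x r : int) (s W : seq int) :
  all (fun y => y <= x) s -> all (fun y => y <= r) W -> r <= x ->
  all (fun y => y <= x) (s ++ W).
Proof. by move=> Hs HW hr; rewrite all_cat Hs (@all_le_trans r x W HW hr). Qed.

Ltac boolsplit := rewrite /=; repeat (apply/andP; split); try done; lia.
Ltac gen_atoms :=
  repeat match goal with |- context [nat_of_bool (?q ?x)] =>
    let b := fresh "b" in set b := nat_of_bool (q x); clearbody b end.
Ltac permtac := rewrite ?catA perm_cat2r; apply/permP => ? /=; gen_atoms; lia.

Lemma four_moves (A B h X Y r : int) (W l : seq int) :
  A = B + 2 * h -> X + Y = A + h -> Y <= X -> X <= Y + 1 -> 0 <= B ->
  X <= 2 * h -> h <= X -> h <= Y -> A - X <= h -> 0 <= A - X ->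
  all (fun y => y <= r) W -> r <= A - X ->
  perm_eq l ([:: A; A; A; A; 2 * h; X; Y] ++ W) ->
  reduces_to_E0 (h, [:: Y + 2 * X - 2 * A; 2 * h - X; 0; 0; 0; 0; 0] ++ W) ->
  reduces_to_E0 (2 * A + h, l).
Proof.
move=> HA HXY H1 H2 HB H3 H4 H5 H6 H7 HW Hr Hl Hfin.
apply: (@move3' _ (A + 2 * h) A A A h h h ([:: A; 2 * h; X; Y] ++ W) l
          ([:: A; 2 * h; X; Y; h; h; h] ++ W)) => //; try lia; try (by permtac); try (by apply: all_catW HW _; [boolsplit | lia]).
apply: (@move3' _ (A + 2 * h - X) A (2 * h) X (A - X) (2 * h - X) 0
          ([:: Y; h; h; h] ++ W) _
          ([:: Y; h; h; h; A - X; 2 * h - X; 0] ++ W)) => //; try lia; try (by permtac); try (by apply: all_catW HW _; [boolsplit | lia]).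
apply: (@move3' _ Y Y h h (A - X) 0 0
          ([:: h; A - X; 2 * h - X; 0] ++ W) _
          ([:: h; A - X; A - X; 0; 0; 2 * h - X; 0] ++ W)) => //; try lia; try (by permtac); try (by apply: all_catW HW _; [boolsplit | lia]).
apply: (@move3' _ h h (A - X) (A - X) (Y + 2 * X - 2 * A) 0 0
          ([:: 0; 0; 2 * h - X; 0] ++ W) _
          ([:: Y + 2 * X - 2 * A; 2 * h - X; 0; 0; 0; 0; 0] ++ W)) => //; try lia; try (by permtac); try (by apply: all_catW HW _; [boolsplit | lia]).
Qed.

Ltac gen_counts :=
  repeat match goal with |- context [count ?q ?s] =>
    let b := fresh "c" in set b := count q s; clearbody b end.
Ltac permtac2 := apply/permP => ?; rewrite /= ?count_cat /= ?count_cat /=; gen_atoms; gen_counts; lia.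

Lemma chain (t z : nat) (l : seq int) :
  perm_eq l ((t%:Z) :: nseq (2 * t + 2) 1 ++ nseq z 0) ->
  reduces_to_E0 ((t.+1)%:Z, l).
Proof.
elim: t z l => [|t IH] z l Hl.
- apply: (@move3' _ 0 1 1 0 0 0 (-1) (nseq z 0) l (-1 :: nseq z.+2 0)) => //.
  + by rewrite (permPl Hl); permtac2.
  + by rewrite all_nseq orbT.
  + permtac2.
  + exact: final_red.
- have E : (2 * t.+1 + 2 = (2 * t + 2).+2)%N by lia.
  apply: (@move3' _ (t.+1)%:Z (t.+1)%:Z 1 1 (t%:Z) 0 0
            (nseq (2 * t + 2) 1 ++ nseq z 0) l
            ((t%:Z) :: nseq (2 * t + 2) 1 ++ nseq z.+2 0)); try lia.
  + by rewrite (permPl Hl) E; permtac2.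
  + by rewrite all_cat !all_nseq !orbT.
  + permtac2.
  + exact: IH.
Qed.

Definition Teven (j : nat) : seq int := [:: (j.+1)%:Z; j%:Z] ++ nseq (2 * j + 1) 1.
Definition Todd (j : nat) : seq int := nseq 2 (j.+1)%:Z ++ nseq (2 * j + 2) 1.

Lemma even_end (j z : nat) (l : seq int) :
  perm_eq l ([:: j%:Z; j%:Z] ++ Teven j ++ nseq z 0) ->
  reduces_to_E0 ((2 * j + 1)%N%:Z, l).
Proof.
rewrite /Teven; case: j => [|j] Hl.
- apply: (chain 0 z.+2); rewrite (permPl Hl) (_ : (2 * 0 + 2 = 2)%N) // (_ : (2 * 0 + 1 = 1)%N) //; permtac2.
- apply: (@move3' _ (j.+2)%:Z (j.+2)%:Z (j.+1)%:Z (j.+1)%:Z 1 0 0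
          ((j.+1)%:Z :: nseq (2 * j.+1 + 1) 1 ++ nseq z 0) l
          ((j.+1)%:Z :: nseq (2 * j.+1 + 2) 1 ++ nseq z.+2 0)); try lia.
  + rewrite (permPl Hl); permtac2.
  + rewrite /= all_cat !all_nseq /=; apply/andP; split; [lia|].
    apply/andP; split; apply/orP; right; lia.
  + have E : (2 * j.+1 + 2 = (2 * j.+1 + 1).+1)%N by lia.
    rewrite E; permtac2.
  + exact: chain.
Qed.

Lemma odd_end (j z : nat) (l : seq int) :
  perm_eq l ([:: (j.+1)%:Z; j%:Z] ++ Todd j ++ nseq z 0) ->
  reduces_to_E0 ((2 * j + 2)%N%:Z, l).
Proof.
rewrite /Todd => Hl.
apply: (@move3' _ (j.+1)%:Z (j.+1)%:Z (j.+1)%:Z (j.+1)%:Z 0 0 0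
          (j%:Z :: nseq (2 * j + 2) 1 ++ nseq z 0) l
          (j%:Z :: nseq (2 * j + 2) 1 ++ nseq z.+3 0)); try lia.
+ rewrite (permPl Hl); permtac2.
+ rewrite /= all_cat !all_nseq /=; apply/andP; split; [lia|].
  apply/andP; split; apply/orP; right; lia.
+ permtac2.
+ exact: chain.
Qed.

Fixpoint lev (i n : nat) : int * int :=
  match n with
  | O => (Posz (2 * i + 3)%N, Posz (i + 1)%N)
  | n'.+1 => let p := lev i n' in (p.1 + 2 * (2 * p.1 + p.2), 2 * p.1 + p.2)
  end.
Definition la i n := (lev i n).1.
Definition lh i n := (lev i n).2.
Lemma la_S i n : la i n.+1 = la i n + 2 * lh i n.+1. Proof. by []. Qed.
Lemma lh_S i n : lh i n.+1 = 2 * la i n + lh i n. Proof. by []. Qed.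
Lemma la0 i : la i 0 = Posz (2 * i + 3)%N. Proof. by []. Qed.
Lemma lh0 i : lh i 0 = Posz (i + 1)%N. Proof. by []. Qed.

Lemma lev_pos i n : 1 <= lh i n /\ 2 * lh i n + 1 <= la i n.
Proof.
elim: n => [|n [H1 H2]]; first by rewrite la0 lh0; split; lia.
rewrite la_S !lh_S; split; lia.
Qed.

Definition Tl (i : nat) : seq int := if odd i then Todd i./2 else Teven i./2.

Fixpoint Rlow (i n : nat) : seq int :=
  match n with
  | O => Tl i
  | n'.+1 => nseq 4 (la i n') ++ 2 * lh i n' :: Rlow i n'
  end.

Lemma Tl_le i : all (fun y => y <= Posz (i./2).+1) (Tl i).
Proof.
rewrite /Tl /Teven /Todd; case: (odd i) => /=; rewrite ?all_cat !all_nseq /=;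
  repeat (apply/andP; split); rewrite ?orbT //; try lia.
Qed.

Lemma Rlow_le i n : all (fun y => y <= la i n) (Rlow i n.+1).
Proof.
elim: n => [|n IH].
- rewrite /= la0 lh0; repeat (apply/andP; split); try lia.
  apply: (@all_le_trans _ _ _ (Tl_le i)); lia.
- have [H1 H2] := lev_pos i n; have [H3 H4] := lev_pos i n.+1.
  have IH' : all (fun y => y <= la i n) (Rlow i n).
    by move: IH => /= /and5P[_ _ _ _ /andP[_ H]].
  rewrite [Rlow i n.+2]/=.
  do 10 (apply/andP; split; first (rewrite ?la_S; lia)).
  apply: (@all_le_trans _ _ _ IH'); rewrite la_S; lia.
Qed.

Lemma level_red (i n : nat) : forall (X Y : int) (z : nat) (l : seq int),
  X + Y = la i n + lh i n -> Y <= X -> X <= Y + 1 ->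
  perm_eq l ([:: la i n; la i n; la i n; la i n; 2 * lh i n; X; Y]
               ++ Rlow i n ++ nseq z 0) ->
  reduces_to_E0 (2 * la i n + lh i n, l).
Proof.
elim: n => [|n IH] X Y z l HXY H1 H2 Hl.
- have Hi : i = (odd i + 2 * i./2)%N by rewrite -[LHS]odd_double_half mul2n.
  move: HXY Hl; rewrite la0 lh0 /= => HXY Hl.
  apply: (@four_moves _ 1 _ X Y (Posz (i./2).+1) (Tl i ++ nseq z 0)) => //; try lia.
    by rewrite all_cat Tl_le all_nseq orbT.
  + move: (Tl_le i); rewrite /Tl; case Eo: (odd i) Hi => /= Hi _.
    * have -> : Y + 2 * X - 2 * Posz (2 * i + 3)%N = (i./2).+1 by lia.
      have -> : 2 * Posz (i + 1)%N - X = (i./2) by lia.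
      have -> : Posz (i + 1)%N = (2 * i./2 + 2)%N by lia.
      apply: (odd_end _ z.+4.+1); permtac2.
    * have -> : Y + 2 * X - 2 * Posz (2 * i + 3)%N = (i./2) by lia.
      have -> : 2 * Posz (i + 1)%N - X = (i./2) by lia.
      have -> : Posz (i + 1)%N = (2 * i./2 + 1)%N by lia.
      apply: (even_end _ z.+4.+1); permtac2.
- have [P1 P2] := lev_pos i n; have [P3 P4] := lev_pos i n.+1.
  have HA := la_S i n; have Hh := lh_S i n.
  apply: (@four_moves _ (la i n) _ X Y (la i n) (Rlow i n.+1 ++ nseq z 0)) => //; try lia.
  + rewrite all_cat Rlow_le all_nseq; apply/orP; right; lia.
  + have := IH (Y + 2 * X - 2 * la i n.+1) (2 * lh i n.+1 - X) z.+4.+1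
      ([:: Y + 2 * X - 2 * la i n.+1; 2 * lh i n.+1 - X; 0; 0; 0; 0; 0]
         ++ Rlow i n.+1 ++ nseq z 0).
    rewrite -lh_S; apply; try lia.
    rewrite [Rlow i n.+1]/=; permtac2.
Qed.
Fixpoint Lcf (i n : nat) : seq nat :=
  if n is n'.+1 then 1%N :: 4%N :: Lcf i n' else [:: 1%N; (2 + 2 * i)%N].

Fixpoint ys (i n : nat) : seq int :=
  if n is n'.+1 then la i n :: 2 * lh i n :: ys i n'
  else [:: la i 0; 2 * lh i 0; 1; 0].

Fixpoint Gl (i n : nat) : seq int :=
  if n is n'.+1 then nseq 4 (la i n') ++ 2 * lh i n' :: Gl i n' else [::].

Lemma bseq_eq i n : Defs.bseq n.+1 i = 5%N :: Lcf i n.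
Proof.
rewrite /Defs.bseq /=; congr (_ :: _).
by elim: n => //= n ->.
Qed.

Lemma size_Lcf i n : size (Lcf i n) = (2 * n + 2)%N.
Proof. elim: n => //= n ->; lia. Qed.

Lemma ys0 i n : nth 0 (ys i n) 0 = la i n. Proof. by case: n. Qed.
Lemma ys1 i n : nth 0 (ys i n) 1 = 2 * lh i n. Proof. by case: n. Qed.

Lemma ys_rec i n m : (m < 2 * n + 2)%N ->
  nth 0 (ys i n) m =
  (nth 0%N (Lcf i n) m)%:Z * nth 0 (ys i n) m.+1 + nth 0 (ys i n) m.+2.
Proof.
elim: n m => [|n IH] m Hm.
- case: m Hm => [|[|m]] //= _; rewrite ?la0 ?lh0; lia.
- case: m Hm => [|[|m]] Hm.
  + rewrite /= ys0 la_S; lia.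
  + rewrite /= ys1 lh_S ys0; lia.
  + rewrite /=; apply: IH; lia.
Qed.

Lemma intrP (n : nat) : ((n%:Z)%:~R : rat) = n%:R.
Proof. by rewrite -pmulrn. Qed.

Lemma lev_ratpos i n : 0 < ((la i n)%:~R : rat) /\ 0 < ((lh i n)%:~R : rat).
Proof. have [H1 H2] := lev_pos i n; split; rewrite ltr0z; lia. Qed.

Lemma cf_cons (a : nat) (s : seq nat) : s != [::] -> cf_val (a :: s) = a%:R + (cf_val s)^-1.
Proof. by case: s. Qed.

Lemma Lcf_nil i n : Lcf i n != [::]. Proof. by case: n. Qed.

Lemma cf_Lcf i n : cf_val (Lcf i n) = (la i n)%:~R / (2 * lh i n)%:~R.
Proof.
elim: n => [|n IH].
- rewrite /= la0 lh0 intrM !intrP.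
  have H : (0 : rat) <= i%:R by rewrite ler0n.
  field; apply/andP; split; apply/eqP; lra.
- rewrite [Lcf i n.+1]/= cf_cons // cf_cons ?Lcf_nil // IH la_S lh_S !(intrD, intrM).
  have [A H] := lev_ratpos i n.
  set a := ((la i n)%:~R : rat) in A *; set h := ((lh i n)%:~R : rat) in H *.
  clearbody a h.
  field; repeat (apply/andP; split); apply/eqP; lra.
Qed.

Lemma bki_eq i n : bki n.+1 i = ((5 * la i n + 2 * lh i n)%:~R) / (la i n)%:~R.
Proof.
rewrite /bki bseq_eq cf_cons ?Lcf_nil // cf_Lcf !(intrD, intrM).
have [A H] := lev_ratpos i n.
set a := ((la i n)%:~R : rat) in A *; set h := ((lh i n)%:~R : rat) in H *.
clearbody a h.
field; repeat (apply/andP; split); apply/eqP; lra.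
Qed.

Lemma cop i n : exists u v : int, u * la i n + v * (2 * lh i n) = 1.
Proof.
elim: n => [|n [u [v Huv]]].
- exists 1, (-1); rewrite la0 lh0; lia.
- exists (u - 4 * v), (5 * v - u); rewrite -[RHS]Huv la_S lh_S.
  set a := la i n; set h := lh i n; clearbody a h; ring.
Qed.

Lemma pq_eq i n : pk n.+1 i = 5 * la i n + 2 * lh i n /\ qk n.+1 i = la i n.
Proof.
have [u [v Huv]] := cop i n.
have [P1 P2] := lev_pos i n.
have Hc : coprime `|5 * la i n + 2 * lh i n| `|la i n|.
  rewrite -coprimezE; apply/coprimezP; exists (v, u - 5 * v) => /=.
  rewrite -[RHS]Huv; set a := la i n; set h := lh i n; clearbody a h; ring.
rewrite /pk /qk bki_eq coprimeq_num // coprimeq_den //; split.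
- rewrite gtr0_sg ?mul1r //; lia.
- case: eqP => [|_]; first lia.
  rewrite gtr0_norm //; lia.
Qed.

Lemma xpair_gen (a : rat) (l : seq nat) (y : nat -> rat) (N : nat) :
  y 0%N = 1 -> y 1%N = a - (nth 0%N l 0)%:R ->
  (forall m, (m < N)%N -> y m.+2 = y m - (nth 0%N l m.+1)%:R * y m.+1) ->
  forall m, (m <= N)%N -> xpair a l m = (y m, y m.+1).
Proof.
move=> H0 H1 Hr; elim=> [|m IH] Hm /=; first by rewrite H0 H1.
by rewrite IH ?(ltnW Hm) //= Hr.
Qed.

Definition blocks (l : seq nat) (s : seq int) : seq int :=
  flatten [seq nseq p.1 p.2 | p <- zip l s].

Lemma blocks_cons c l y s : blocks (c :: l) (y :: s) = nseq c y ++ blocks l s.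
Proof. by []. Qed.

Lemma blocks_eq i n c : blocks (c :: Lcf i n) (ys i n) =
  nseq c (la i n) ++ 2 * lh i n :: Gl i n ++ nseq (2 + 2 * i) 1.
Proof.
elim: n c => [|n IH] c.
- by rewrite /blocks /= cats0.
- rewrite [Lcf i n.+1]/= [ys i n.+1]/= !blocks_cons IH /=.
  by [].
Qed.

Lemma map_iota_zip (T1 T2 T3 : Type) (x1 : T1) (x2 : T2) (f : T1 -> T2 -> T3)
  (l1 : seq T1) (l2 : seq T2) : (size l1 <= size l2)%N ->
  [seq f (nth x1 l1 j) (nth x2 l2 j) | j <- iota 0 (size l1)] =
  [seq f p.1 p.2 | p <- zip l1 l2].
Proof.
elim: l1 l2 => [|a l1 IH] [|b l2] //= H.
congr (_ :: _); rewrite -IH //.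
rewrite -[1%N]addn0 iotaDl -map_comp; apply: eq_map => j /=.
by [].
Qed.

Lemma size_ys i n : size (ys i n) = (2 * n + 4)%N.
Proof. elim: n => //= n ->; lia. Qed.

Lemma xw_eq i n j : (j <= 2 * n + 2)%N ->
  xw (bki n.+1 i) (Defs.bseq n.+1 i) j =
  (nth 0 (ys i n) j)%:~R / (la i n)%:~R.
Proof.
move=> Hj; rewrite /xw (@xpair_gen _ _ (fun m => (nth 0 (ys i n) m)%:~R / (la i n)%:~R)
  (2 * n + 2)) //.
- rewrite ys0 divff //; have [A _] := lev_ratpos i n; lra.
- rewrite ys1 bseq_eq bki_eq /= !(intrD, intrM).
  have [A H] := lev_ratpos i n.
  set a := ((la i n)%:~R : rat) in A *; set h := ((lh i n)%:~R : rat) in H *.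
  clearbody a h; field; apply/eqP; lra.
- move=> m Hm; rewrite bseq_eq (ys_rec _ _ _ Hm) /= !(intrD, intrM) intrP.
  have [A H] := lev_ratpos i n.
  set a := ((la i n)%:~R : rat) in A *.
  set y1 := ((nth 0 (ys i n) m.+1)%:~R : rat).
  set y2 := ((nth 0 (ys i n) m.+2)%:~R : rat).
  set c := ((nth 0%N (Lcf i n) m)%:R : rat).
  clearbody a y1 y2 c; field; apply/eqP; lra.
Qed.

Lemma qw_eq i n : qw n.+1 i =
  [seq x%:~R | x <- nseq 5 (la i n) ++ 2 * lh i n :: Gl i n ++ nseq (2 + 2 * i) 1].
Proof.
rewrite /qw /weights (proj2 (pq_eq i n)) -(blocks_eq i n 5) /blocks -(bseq_eq i n).
rewrite map_flatten -map_comp.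
rewrite -(@map_iota_zip _ _ _ 0%N 0 (fun a b => [seq (x%:~R : rat) | x <- nseq a b])); last first.
  by rewrite bseq_eq /= size_Lcf size_ys; lia.
rewrite map_flatten -map_comp; congr flatten.
apply/eq_in_map => j; rewrite mem_iota add0n => /andP[_ Hj] /=.
rewrite map_nseq xw_eq; last by move: Hj; rewrite bseq_eq /= size_Lcf; lia.
rewrite map_nseq; congr nseq; have [A _] := lev_ratpos i n.
rewrite mulrC divfK //; lra.
Qed.

Lemma Rlow_Gl i n : Rlow i n = Gl i n ++ Tl i.
Proof. by elim: n => //= n ->. Qed.

Lemma Tl_nonneg i : all (fun y => 0 <= y) (Tl i).
Proof.
rewrite /Tl /Teven /Todd; case: (odd i) => /=; rewrite ?all_cat !all_nseq /=;
  repeat (apply/andP; split); rewrite ?orbT //; try lia.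
Qed.

Lemma Rlow_nonneg i n : all (fun y => 0 <= y) (Rlow i n).
Proof.
elim: n => [|n IH]; first exact: Tl_nonneg.
have [P1 P2] := lev_pos i n.
rewrite [Rlow i n.+1]/=; do 5 (apply/andP; split; first lia); exact: IH.
Qed.

Lemma Rlow_le_a i n : all (fun y => y <= la i n) (Rlow i n).
Proof.
case: n => [|n].
- apply: (@all_le_trans _ _ _ (Tl_le i)); rewrite la0; lia.
- apply: (@all_le_trans _ _ _ (Rlow_le i n)); rewrite la_S; have := lev_pos i n.+1; lia.
Qed.

Lemma parity i n : exists D : int, 3 * la i n + lh i n = 2 * D + Posz (odd i) /\ 0 <= D.
Proof.
have Hi : i = (odd i + 2 * i./2)%N by rewrite -[LHS]odd_double_half mul2n.
elim: n => [|n [D [HD HD0]]].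
- exists (Posz (7 * i./2 + 5 + 3 * odd i)%N); rewrite la0 lh0; split; lia.
- have [P1 P2] := lev_pos i n.
  exists (D + 7 * la i n + 3 * lh i n); rewrite la_S !lh_S; split; lia.
Qed.

Lemma sorted_head (a x : int) (m mr : seq int) : perm_eq m (x :: mr) ->
  sorted geZ (x :: mr) -> a \in m -> all (fun y => y <= a) m -> x = a.
Proof.
move=> Hp Hs Ha Hall.
have Hx : x \in m by rewrite (perm_mem Hp) mem_head.
have xa : x <= a by move/allP: Hall => /(_ x Hx).
move: Ha; rewrite (perm_mem Hp) in_cons => /orP[/eqP -> //|Ha].
have Htr : ssrbool.transitive geZ by move=> y z w; rewrite /geZ => h1 h2; exact: le_trans h2 h1.
have := order_path_min Htr Hs => /allP /(_ a Ha); rewrite /geZ => ax.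
by apply/eqP; rewrite eq_le xa ax.
Qed.

Lemma Eclass_eq i n : Eclass n.+1 i =
  let s := [seq (x%:~R : rat) | x <- nseq 5 (la i n) ++ 2 * lh i n :: Gl i n] in
  if ~~ odd i then
    (dk n.+1 i, dk n.+1 i, s ++ [:: (i./2.+1)%:R; (i./2)%:R] ++ nseq (2 * i./2 + 1)%N 1)
  else
    (dk n.+1 i + 1/2, dk n.+1 i - 1/2, s ++ nseq 2 (i./2.+1)%:R ++ nseq (2 * i./2 + 2)%N 1).
Proof.
rewrite /Eclass qw_eq.
have -> : nseq 5 (la i n) ++ 2 * lh i n :: Gl i n ++ nseq (2 + 2 * i) 1 =
  (nseq 5 (la i n) ++ 2 * lh i n :: Gl i n) ++ nseq (2 + 2 * i) 1 by rewrite -catA.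
rewrite map_cat size_cat map_nseq size_nseq addnK take_size_cat //.
Qed.

Lemma intr1' : ((1 : int)%:~R : rat) = 1. Proof. by []. Qed.

Lemma start_red i n (d e : int) (mr : seq int) :
  perm_eq mr (nseq 4 (la i n) ++ 2 * lh i n :: Rlow i n) ->
  d + e = 3 * la i n + lh i n -> e <= d -> d <= e + 1 ->
  reduces_to_E0 (d + e - la i n, [:: d - la i n, e - la i n & mr]).
Proof.
move=> Hmr He H1 H2.
have -> : d + e - la i n = 2 * la i n + lh i n by lia.
apply: (@level_red i n (d - la i n) (e - la i n) 0); try lia.
apply: (@perm_trans _ ([:: d - la i n; e - la i n] ++
   (nseq 4 (la i n) ++ 2 * lh i n :: Rlow i n))).
- by rewrite /= !perm_cons.
- rewrite cats0; permtac2.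
Qed.

Theorem main (k i : nat) : (1 <= k)%N ->
  exists (d e : int) (m m' : seq int),
    Eclass k i = (d%:~R, e%:~R, [seq x%:~R | x <- m]) /\
    perm_eq m m' /\ in_calE d e m'.
Proof.
case: k => // n _.
have [D [HD HD0]] := parity i n.
have [P1 P2] := lev_pos i n.
have [Hp Hq] := pq_eq i n.
set m := nseq 5 (la i n) ++ 2 * lh i n :: Rlow i n.
have Hdk : dk n.+1 i = (D%:~R + (odd i)%:R / 2 : rat).
  rewrite /dk Hp Hq.
  have -> : 5 * la i n + 2 * lh i n + la i n = 4 * D + 2 * Posz (odd i) by lia.
  rewrite !(intrD, intrM) intrP.
  rewrite ?intrP.
  set y := ((odd i)%:R : rat); set z := (D%:~R : rat); clearbody y z; field; rewrite ?(eqxx, andbT) //=.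
have Hm : Eclass n.+1 i =
  (if odd i then (D + 1)%:~R else D%:~R, D%:~R, [seq x%:~R | x <- m]).
  rewrite Eclass_eq /m Rlow_Gl catA map_cat /Tl Hdk.
  case: (odd i) => /=.
  - congr (_, _, _); [by field | by field | ].
    by rewrite map_cat /Todd map_cat !map_nseq intrP ?intr1'.
  - congr (_, _, _); [by field | by field | ].
    by rewrite map_cat /Teven map_cat !map_nseq -catA /= !intrP ?intr1'.
exists (if odd i then D + 1 else D), D, m, (sort geZ m); split.
  by rewrite Hm; case: (odd i).
split; first by rewrite perm_sym perm_sort.
set d := (if odd i then D + 1 else D).
have Hde : d + D = 3 * la i n + lh i n by rewrite /d; case: (odd i) HD; lia.
have H1 : D <= d by rewrite /d; case: (odd i); lia.
have H2 : d <= D + 1 by rewrite /d; case: (odd i); lia.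
have Hnn : all (fun y => 0 <= y) m.
  rewrite /m all_cat all_nseq /= Rlow_nonneg andbT; apply/andP; split; lia.
have Hle : all (fun y => y <= la i n) m.
  rewrite /m all_cat all_nseq /= Rlow_le_a andbT lexx /=; lia.
have Hsz : sort geZ m = head 0 (sort geZ m) :: behead (sort geZ m).
  by case E: (sort geZ m) => //; move: (size_sort geZ m); rewrite E /m.
move: Hsz; set x := head 0 _; set mr := behead _ => Hsz.
have Hs : sorted geZ (x :: mr) by rewrite -Hsz; exact: (sort_sorted geZ_total).
have Hpm : perm_eq m (x :: mr) by rewrite -Hsz perm_sym perm_sort.
have Hx : x = la i n.
  apply: (@sorted_head (la i n) x m mr Hpm Hs) => //; by rewrite /m mem_cat mem_nseq eqxx.
have Hmr : perm_eq mr (nseq 4 (la i n) ++ 2 * lh i n :: Rlow i n).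
  by move: Hpm; rewrite perm_sym Hx /m /= perm_cons.
have Hred := @start_red i n d D mr Hmr Hde H1 H2.
have [I1 I2] := @red_inv _ Hred.
rewrite Hsz; right; split; [lia|]; split; [lia|]; split; first exact: Hs.
split; first by rewrite -Hsz all_sort.
move: I1 I2; rewrite /inv1 /inv2 /= !big_cons -Hx => I1 I2.
split; first lia.
split.
  have E : (d + D - x) ^+ 2 - ((d - x) ^+ 2 + ((D - x) ^+ 2 + \sum_(y <- mr) y ^+ 2)) =
    2 * d * D - (x ^+ 2 + \sum_(y <- mr) y ^+ 2) by ring.
  move: I2; rewrite E => I2; set S := \sum_(j <- mr) j ^+ 2 in I2 *; set P := 2 * d * D in I2 *; set Q := x ^+ 2 in I2 *; clearbody S P Q; lia.
by exists x, mr; split => //; rewrite Hx.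
Qed.

Theorem proposition6p18 (k i : nat) : (1 <= k)%N ->
  exists (d e : int) (m m' : seq int),
    Eclass k i = (d%:~R, e%:~R, [seq x%:~R | x <- m]) /\
    perm_eq m m' /\ in_calE d e m'.
Proof. exact: main. Qed.
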